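(* Let $G$ be a graph on $V$ whose adjacency matrix $A$ is invertible over $\mathbf F_2$, and let $G^R=P_V(G)$ be its retrograph, i.e. the graph on $V$ with adjacency matrix $A^{-1}$. Then: (a) $G^R$ is the unique graph $H$ on $V$ with $\mathcal R_0(H)=\{V\setminus S:S\in\mathcal R_0(G)\}$; (b) for every $W\subseteq V$, $W$ is reducible in $G$ if and only if $V\setminus W$ is reducible in $G^R$; (c) in that case $\Gamma_W(G)$ is nonsingular and $(\Gamma_W(G))^R=I_{V\setminus W}(G^R)$.
   Context: A graph means a finite simple graph in which loops are allowed, with adjacency matrix $A$ over $\mathbf F_2$ ($A_{vv}=1$ iff $v$ has a loop); a graph is nonsingular if its adjacency matrix is invertible over $\mathbf F_2$. $I_U(G)$ is the induced subgraph on $U$. Let $\mathcal V$ be the $\mathbf F_2$-space with basis $V$, $\mathcal E(x,y)=x^TAy$, $\langle W\rangle$ the span of $W$, $\langle W\rangle^{\perp\mathcal E}=\{x:\mathcal E(x,w)=0\ \forall w\in\langle W\rangle\}$; $W$ is reducible if $\langle W\rangle+\langle W\rangle^{\perp\mathcal E}=\mathcal V$; then $\mathcal E^W(x_1,x_2)=\mathcal E(x_1',x_2')$ with $x_i'\in\langle W\rangle^{\perp\mathcal E}$, $x_i-x_i'\in\langle W\rangle$, and $\Gamma_W(G)$ is the graph on $V\setminus W$ in which $v,w$ (possibly equal) are joined iff $\mathcal E^W(v,w)=1$. The pivotal poset $\mathcal R_0(G)$ is the set of reducible $W$ of nullity $0$, equivalently those with $A_{W,W}$ invertible. For a nonsingular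 graph $G$, its retrograph $G^R$ is the graph on the same vertex set with adjacency matrix $A^{-1}$ (the pivot of $G$ by its whole vertex set). *)

(* Defs.v *)
(* Graphs on vertex set V = 'I_n, given by a symmetric
   adjacency matrix over F_2 (loops = diagonal entries). *)
From HB Require Import structures.
From mathcomp Require Import all_boot all_order all_algebra.
Set Implicit Arguments. Unset Strict Implicit. Unset Printing Implicit Defensive.
Import GRing.Theory.
Local Open Scope ring_scope.

Notation F2 := 'F_2.

Definition is_graph n (A : 'M[F2]_n) : Prop := A^T = A.

(* A_{W,W}: adjacency matrix of the induced subgraph I_W(G),
   vertices of W listed in the canonical order enum W *)
Definition subadj n (W : {set 'I_n}) (A : 'M[F2]_n) : 'M[F2]_#|W| :=
  mxsub (@enum_val _ (mem W)) (@enum_val _ (mem W)) A.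

Definition Eform n (A : 'M[F2]_n) (x y : 'cV[F2]_n) : F2 := (x^T *m A *m y) 0 0.

(* x in <W>, the span of the basis vectors in W: support of x contained in W *)
Definition in_span n (W : {set 'I_n}) (x : 'cV[F2]_n) : bool :=
  [forall i, (i \notin W) ==> (x i 0 == 0)].

Definition in_perp n (A : 'M[F2]_n) (W : {set 'I_n}) (x : 'cV[F2]_n) : bool :=
  [forall y, in_span W y ==> (Eform A x y == 0)].

Definition reducible n (A : 'M[F2]_n) (W : {set 'I_n}) : Prop :=
  forall x : 'cV[F2]_n, exists y z, [/\ in_span W y, in_perp A W z & x = y + z].

(* a chosen x' in <W>^perp with x - x' in <W> (well-defined up to irrelevant
   choice when W is reducible) *)
Definition perp_part n (A : 'M[F2]_n) (W : {set 'I_n}) (x : 'cV[F2]_n) : 'cV[F2]_n :=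
  odflt 0 [pick x' | in_perp A W x' && in_span W (x - x')].

Definition EW n (A : 'M[F2]_n) (W : {set 'I_n}) (x1 x2 : 'cV[F2]_n) : F2 :=
  Eform A (perp_part A W x1) (perp_part A W x2).

(* adjacency matrix of Gamma_W(G), a graph on V \ W, vertices listed by enum (~: W) *)
Definition Gamma n (A : 'M[F2]_n) (W : {set 'I_n}) : 'M[F2]_#|~: W| :=
  \matrix_(i, j) EW A W (delta_mx (@enum_val _ (mem (~: W)) i) 0)
                        (delta_mx (@enum_val _ (mem (~: W)) j) 0).

Definition R0 n (A : 'M[F2]_n) : {set {set 'I_n}} :=
  [set W : {set 'I_n} | subadj W A \in unitmx].

Definition retro n (A : 'M[F2]_n) : 'M[F2]_n := invmx A.

(* Main.v *)
Require Import Defs.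
From HB Require Import structures.
From mathcomp Require Import all_boot all_order all_algebra.
From mathcomp Require Import ring.
Import GRing.Theory.
Local Open Scope ring_scope.
Set Implicit Arguments. Unset Strict Implicit.

Definition kerP n (M : 'M[F2]_n) (S : {set 'I_n}) : Prop :=
  forall x : 'cV[F2]_n, in_span S x -> (forall i, i \in S -> (M *m x) i 0 = 0) -> x = 0.

Definition Emx n (S : {set 'I_n}) : 'M[F2]_(n, #|S|) :=
  \matrix_(i, a) ((i == enum_val a)%:R).

Lemma in_spanP n (S : {set 'I_n}) (x : 'cV[F2]_n) :
  reflect (forall i, i \notin S -> x i 0 = 0) (in_span S x).
Proof.
apply: (iffP forallP) => H i; first by move=> hi; apply/eqP; exact: (implyP (H i)).
by apply/implyP => hi; apply/eqP; apply: H.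
Qed.

Lemma EtE n (S : {set 'I_n}) m (N : 'M[F2]_(n, m)) a j :
  ((Emx S)^T *m N) a j = N (enum_val a) j.
Proof.
rewrite mxE (bigD1 (enum_val a)) //= big1 => [|i /negbTE ne].
  by rewrite !mxE eqxx mul1r addr0.
by rewrite !mxE ne mul0r.
Qed.

Lemma MEmul n (S : {set 'I_n}) m (N : 'M[F2]_(m, n)) i b :
  (N *m Emx S) i b = N i (enum_val b).
Proof.
rewrite mxE (bigD1 (enum_val b)) //= big1 => [|l /negbTE ne].
  by rewrite !mxE eqxx mulr1 addr0.
by rewrite !mxE ne mulr0.
Qed.

Lemma Emul_in n (S : {set 'I_n}) m (N : 'M[F2]_(#|S|, m)) a j :
  (Emx S *m N) (enum_val a) j = N a j.
Proof.
rewrite mxE (bigD1 a) //= big1 => [|b ne].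
  by rewrite !mxE eqxx mul1r addr0.
rewrite !mxE; case: eqP => [/enum_val_inj e|]; last by rewrite mul0r.
by rewrite e eqxx in ne.
Qed.

Lemma Emul_out n (S : {set 'I_n}) m (N : 'M[F2]_(#|S|, m)) i j :
  i \notin S -> (Emx S *m N) i j = 0.
Proof.
move=> hi; rewrite mxE big1 // => b _; rewrite !mxE.
case: eqP => [e|]; last by rewrite mul0r.
by move: (enum_valP b); rewrite -e (negbTE hi).
Qed.

Lemma subadjE n (S : {set 'I_n}) (M : 'M[F2]_n) :
  subadj S M = (Emx S)^T *m M *m Emx S.
Proof.
apply/matrixP => a b; rewrite -mulmxA EtE MEmul.
by rewrite /subadj /mxsub mxE.
Qed.

Lemma span_E n (S : {set 'I_n}) (x : 'cV[F2]_n) :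
  in_span S x -> x = Emx S *m ((Emx S)^T *m x).
Proof.
move/in_spanP => H; apply/matrixP => i j; rewrite ord1.
case: (boolP (i \in S)) => hi; last by rewrite Emul_out // H.
rewrite -{2}(enum_rankK_in hi hi) Emul_in EtE.
by rewrite (enum_rankK_in hi hi).
Qed.

Lemma E_span n (S : {set 'I_n}) (y : 'cV[F2]_#|S|) : in_span S (Emx S *m y).
Proof. by apply/in_spanP => i hi; rewrite Emul_out. Qed.

Lemma KC n (S : {set 'I_n}) (M : 'M[F2]_n) :
  subadj S M \in unitmx <-> kerP M S.
Proof.
rewrite subadjE; split.
  move=> U x hx hM.
  have hy : (Emx S)^T *m M *m Emx S *m ((Emx S)^T *m x) = 0.
    rewrite -mulmxA -span_E // -mulmxA.
    by apply/matrixP => a j; rewrite EtE ord1 hM ?enum_valP // mxE.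
  rewrite (span_E hx).
  by rewrite -(mulKmx U ((Emx S)^T *m x)) hy mulmx0 mulmx0.
move=> K; rewrite unitmxE unitfE; apply/negP => /eqP D.
have /det0P [v v0 hv] : \det ((Emx S)^T *m M *m Emx S)^T == 0 by rewrite det_tr D.
have hv' : (Emx S)^T *m M *m Emx S *m v^T = 0.
  by rewrite -[X in X *m _]trmxK -trmx_mul hv trmx0.
have hx0 : Emx S *m v^T = 0.
  apply: K; first exact: E_span.
  move=> i hi; rewrite -(enum_rankK_in hi hi) -EtE !mulmxA hv'.
  by rewrite mxE.
have : v^T = 0 by apply/matrixP => a j; rewrite -(Emul_in (S:=S)) hx0 !mxE.
move/(congr1 trmx); rewrite trmxK trmx0 => ve.
by rewrite ve eqxx in v0.
Qed.

Lemma Lhalf n (M N : 'M[F2]_n) (S T : {set 'I_n}) :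
  (forall i, (i \in T) = (i \notin S)) -> M *m N = 1%:M -> kerP M S -> kerP N T.
Proof.
move=> hT MN K x hx hN.
have hy : N *m x = 0.
  apply: K.
  - by apply/in_spanP => i hi; apply: hN; rewrite hT.
  - move=> i hi; rewrite mulmxA MN mul1mx.
    by move/in_spanP: hx; apply; rewrite hT hi.
by rewrite -(mul1mx x) -MN -mulmxA hy mulmx0.
Qed.

Lemma EformE n (M : 'M[F2]_n) (y x : 'cV[F2]_n) :
  Eform M y x = \sum_i y i 0 * (M *m x) i 0.
Proof. by rewrite /Eform -mulmxA mxE; apply: eq_bigr => i _; rewrite mxE. Qed.

Lemma Eform_sym n (M : 'M[F2]_n) (x y : 'cV[F2]_n) :
  M^T = M -> Eform M x y = Eform M y x.
Proof.
move=> hM; rewrite /Eform.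
have -> : (x^T *m M *m y) 0 0 = ((x^T *m M *m y)^T) 0 0 by rewrite [RHS]mxE.
by rewrite !trmx_mul trmxK hM mulmxA.
Qed.

Lemma PC n (M : 'M[F2]_n) (S : {set 'I_n}) (z : 'cV[F2]_n) :
  M^T = M -> (forall i, i \in S -> (M *m z) i 0 = 0) -> in_perp M S z.
Proof.
move=> hM H; apply/forallP => y; apply/implyP => /in_spanP hy; apply/eqP.
rewrite Eform_sym // EformE big1 // => i _.
by case: (boolP (i \in S)) => hi; [rewrite H // mulr0 | rewrite hy // mul0r].
Qed.

Lemma delta_span n (S : {set 'I_n}) i : i \in S -> in_span S (delta_mx i (0 : 'I_1)).
Proof.
move=> hi; apply/in_spanP => j hj; rewrite mxE; case: eqP => //= e.
by rewrite e hi in hj.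
Qed.

Lemma PI n (M : 'M[F2]_n) (S : {set 'I_n}) (z : 'cV[F2]_n) i :
  M^T = M -> in_perp M S z -> i \in S -> (M *m z) i 0 = 0.
Proof.
move=> hM /forallP/(_ (delta_mx i 0))/implyP H hi.
move: (H (delta_span hi)) => /eqP.
rewrite Eform_sym // EformE (bigD1 i) //= big1 => [|j ne].
  by rewrite mxE !eqxx mul1r addr0.
by rewrite mxE (negbTE ne) mul0r.
Qed.

Lemma red_ker n (M : 'M[F2]_n) (S : {set 'I_n}) :
  M^T = M -> M \in unitmx -> reducible M S <-> kerP M S.
Proof.
move=> hM U; split.
  move=> R x hx hMx.
  have E0 : forall w, Eform M x w = 0.
    move=> w; case: (R w) => y [z [hy hz ->]].
    have -> : Eform M x (y + z) = Eform M x y + Eform M x z.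
      by rewrite /Eform mulmxDr mxE.
    rewrite Eform_sym // EformE big1 => [|i _]; last first.
      case: (boolP (i \in S)) => hi; first by rewrite hMx // mulr0.
      by move/in_spanP: hy => ->; rewrite ?mul0r.
    rewrite Eform_sym // add0r; apply/eqP.
    by move/forallP: hz => /(_ x) /implyP; apply.
  have xM : x^T *m M = 0.
    apply/matrixP => a j; rewrite ord1.
    move: (E0 (delta_mx j 0)); rewrite /Eform -colE mxE => ->.
    by rewrite mxE.
  have : x^T = 0 by rewrite -(mulmxK U (x^T)) xM mul0mx.
  by move/(congr1 trmx); rewrite trmxK trmx0.
move=> K x.
have U' := (KC S M).2 K.
pose y := Emx S *m (invmx (subadj S M) *m ((Emx S)^T *m (M *m x))).
exists y, (x - y); split; first exact: E_span.
  apply: PC => // i hi.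
  have hy : (M *m y) i 0 = (M *m x) i 0.
    rewrite -(enum_rankK_in hi hi) -!EtE /y.
    have -> : (Emx S)^T *m (M *m (Emx S *m (invmx (subadj S M) *m ((Emx S)^T *m (M *m x)))))
       = subadj S M *m (invmx (subadj S M) *m ((Emx S)^T *m (M *m x))).
      by rewrite subadjE !mulmxA.
    by rewrite (mulKVmx U').
  by rewrite mulmxBr mxE [X in _ + X]mxE hy subrr.
by rewrite addrC subrK.
Qed.

Lemma span_sum n (M : 'M[F2]_n) (S : {set 'I_n}) (x : 'cV[F2]_n) i :
  in_span S x -> (M *m x) i 0 = \sum_(j in S) M i j * x j 0.
Proof.
move/in_spanP => H; rewrite mxE [RHS]big_mkcond; apply: eq_bigr => j _.
by case: ifP => // /negbT hj; rewrite H // mulr0.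
Qed.

Lemma ker1 n (M : 'M[F2]_n) u : kerP M [set u] <-> M u u != 0.
Proof.
split=> [K|hu].
  apply/negP => /eqP h0.
  have := K (delta_mx u 0) (delta_span (set11 u)).
  case/(_ _)/Wrap => [i /set1P -> | ].
    by rewrite -colE mxE h0.
  move/matrixP/(_ u 0); rewrite !mxE !eqxx /= => /eqP; by rewrite oner_eq0.
move=> x hx hMx.
have e := hMx u (set11 u); rewrite (@span_sum _ M [set u] x) // big_set1 in e.
move/eqP: e; rewrite mulf_eq0 (negbTE hu) /= => /eqP xu.
apply/matrixP => i j; rewrite ord1 mxE.
case: (eqVneq i u) => [->//|ne].
by move/in_spanP: hx; apply; rewrite in_set1.
Qed.

Lemma vec2E n (u v i : 'I_n) (p q : F2) :
  (p *: delta_mx u 0 + q *: delta_mx v 0 : 'cV[F2]_n) i 0 = p * (i == u)%:R + q * (i == v)%:R.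
Proof. by rewrite !mxE !andbT. Qed.

Lemma Mvec2E n (M : 'M[F2]_n) (u v i : 'I_n) (p q : F2) :
  (M *m (p *: delta_mx u 0 + q *: delta_mx v 0 : 'cV[F2]_n)) i 0 = p * M i u + q * M i v.
Proof. by rewrite mulmxDr -!scalemxAr -!colE !mxE. Qed.

Lemma vec2_span n (u v : 'I_n) (p q : F2) :
  in_span [set u; v] (p *: delta_mx u 0 + q *: delta_mx v 0 : 'cV[F2]_n).
Proof.
apply/in_spanP => i; rewrite in_set2 negb_or => /andP[/negbTE hu /negbTE hv].
by rewrite vec2E hu hv !mulr0 addr0.
Qed.

Lemma ker2 n (M : 'M[F2]_n) u v : M^T = M -> u != v ->
  kerP M [set u; v] <-> M u u * M v v - M u v * M v u != 0.
Proof.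
move=> hM uv.
have hs : M v u = M u v by rewrite -[in LHS]hM mxE.
rewrite hs; split=> [K|hd].
  apply/negP => /eqP hd.
  case: (boolP ((M v v != 0) || (M u v != 0))) => c.
    have := K _ (vec2_span u v (M v v) (- M u v)).
    case/(_ _)/Wrap => [i | ].
      rewrite in_set2 => /orP[/eqP->|/eqP->]; rewrite Mvec2E.
        by rewrite ?hs; apply: etrans hd; ring.
      by rewrite ?hs; ring.
    move=> /matrixP e; move: (e u 0) (e v 0); rewrite !vec2E !eqxx (negbTE uv) eq_sym (negbTE uv).
    rewrite !mxE !mulr1 !mulr0 addr0 add0r => h1 /eqP; rewrite oppr_eq0 => /eqP h2.
    by rewrite h1 h2 eqxx in c.
  move: c; rewrite negb_or !negbK => /andP[/eqP h1 /eqP h2].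
  have := K _ (vec2_span u v 0 1).
  case/(_ _)/Wrap => [i | ].
    rewrite in_set2 => /orP[/eqP->|/eqP->]; rewrite Mvec2E ?hs ?h1 ?h2; ring.
  move=> /matrixP e; move: (e v 0); rewrite !vec2E !eqxx eq_sym (negbTE uv).
  by rewrite !mxE mulr0 mulr1 add0r => /eqP; rewrite oner_eq0.
move=> x hx hMx.
have e1 := hMx u (set21 u v); have e2 := hMx v (set22 u v).
have nuv : u \notin [set v] by rewrite in_set1.
rewrite (@span_sum _ M [set u; v] x) // big_setU1 // big_set1 /= in e1.
rewrite (@span_sum _ M [set u; v] x) // big_setU1 // big_set1 /= in e2.
rewrite hs in e2.
have ha : (M u u * M v v - M u v * M u v) * x u 0 = 0.
  have -> : (M u u * M v v - M u v * M u v) * x u 0 =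
    M v v * (M u u * x u 0 + M u v * x v 0) - M u v * (M u v * x u 0 + M v v * x v 0) by ring.
  by rewrite e1 e2 !mulr0 subr0.
have hb : (M u u * M v v - M u v * M u v) * x v 0 = 0.
  have -> : (M u u * M v v - M u v * M u v) * x v 0 =
    M u u * (M u v * x u 0 + M v v * x v 0) - M u v * (M u u * x u 0 + M u v * x v 0) by ring.
  by rewrite e1 e2 !mulr0 subr0.
move/eqP: ha; rewrite mulf_eq0 (negbTE hd) /= => /eqP ha.
move/eqP: hb; rewrite mulf_eq0 (negbTE hd) /= => /eqP hb.
apply/matrixP => i j; rewrite ord1 mxE.
case: (eqVneq i u) => [->//|ne]; case: (eqVneq i v) => [->//|ne'].
by move/in_spanP: hx; apply; rewrite in_set2 negb_or ne ne'.
Qed.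

Lemma col_mul n m p (A : 'M[F2]_(n, m)) (B : 'M[F2]_(m, p)) j :
  col j (A *m B) = A *m col j B.
Proof. by rewrite !colE mulmxA. Qed.

Lemma trE n m (N : 'M[F2]_(n, m)) a l : N^T a l = N l a.
Proof. by rewrite mxE. Qed.

Lemma perp_partP n (M : 'M[F2]_n) (S : {set 'I_n}) (x : 'cV[F2]_n) :
  reducible M S -> in_perp M S (perp_part M S x) /\ in_span S (x - perp_part M S x).
Proof.
move=> R; rewrite /perp_part; case: pickP => [x' /andP[h1 h2] | H] //=.
exfalso; case: (R x) => y [z [hy hz ex]].
by move: (H z); rewrite hz /= ex addrK hy.
Qed.

Lemma quadE n k (N : 'M[F2]_(n, k)) (M : 'M[F2]_n) a b :
  (N^T *m M *m N) a b = ((col a N)^T *m M *m (col b N)) 0 0.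
Proof. by rewrite tr_col -row_mul -col_mul -row_mul [RHS]mxE [RHS]mxE. Qed.

Lemma GammaP n (M : 'M[F2]_n) (W : {set 'I_n}) :
  M^T = M -> M \in unitmx -> reducible M W ->
  Gamma M W \in unitmx /\ invmx (Gamma M W) = subadj (~: W) (invmx M).
Proof.
move=> hM U R.
pose F := Emx (~: W).
pose X : 'M[F2]_(n, #|~: W|) :=
  \matrix_(i, j) (perp_part M W (delta_mx (@enum_val _ (mem (~: W)) j) 0)) i 0.
have colX j : col j X = perp_part M W (delta_mx (@enum_val _ (mem (~: W)) j) 0).
  by apply/matrixP => i k; rewrite ord1 !mxE.
have P1 i j : i \in W -> (M *m X) i j = 0.
  move=> hi; have -> : (M *m X) i j = (M *m col j X) i 0 by rewrite -col_mul [RHS]mxE.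
  by rewrite colX; apply: (@PI _ M W) => //; exact: (perp_partP _ R).1.
have P2 i j : i \notin W -> X i j = F i j.
  move=> hi; case: (perp_partP (delta_mx (@enum_val _ (mem (~: W)) j) 0) R) => _.
  move/in_spanP/(_ i hi)/eqP; rewrite mxE [X in _ + X]mxE subr_eq0 => /eqP e.
  by rewrite mxE -e !mxE eqxx andbT.
have GE : Gamma M W = X^T *m M *m X.
  apply/matrixP => a b; rewrite quadE !colX.
  by rewrite /Gamma mxE /EW /Eform.
have G1 : X^T *m M *m X = F^T *m (M *m X).
  apply/matrixP => a b; rewrite -mulmxA mxE [RHS]mxE; apply: eq_bigr => l _.
  rewrite !trE; case: (boolP (l \in W)) => hl; first by rewrite P1 // !mulr0.
  by rewrite P2.
have G2 : F *m (F^T *m (M *m X)) = M *m X.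
  apply/matrixP => i j; case: (boolP (i \in ~: W)) => hi.
    by rewrite -(enum_rankK_in hi hi) Emul_in EtE.
  rewrite Emul_out // P1 //; by rewrite in_setC negbK in hi.
have G3 : F^T *m X = 1%:M.
  apply/matrixP => a b; rewrite EtE P2; last first.
    by have := enum_valP a; rewrite in_setC.
  by rewrite !mxE (inj_eq enum_val_inj).
have NG : subadj (~: W) (invmx M) *m Gamma M W = 1%:M.
  rewrite subadjE GE G1 -!mulmxA G2 (mulmxA (invmx M)) (mulVmx U) mul1mx.
  exact: G3.
have [UN UG] := mulmx1_unit NG.
split=> //.
by rewrite -[RHS]mulmx1 -(mulmxV UG) mulmxA NG mul1mx.
Qed.

Lemma F2_cases (x : F2) : x = 0 \/ x = 1.
Proof. case: x => [[|[|m]] Hm]; [left|right|]; try by apply/val_inj. by []. Qed.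

Lemma F2_sq (x : F2) : x * x = x.
Proof. by case: (F2_cases x) => ->; rewrite ?mulr0 ?mulr1. Qed.

Lemma F2_eq (x y : F2) : (x != 0) = (y != 0) -> x = y.
Proof. by case: (F2_cases x) => ->; case: (F2_cases y) => -> //; rewrite ?oner_eq0 ?eqxx. Qed.

Lemma ker_comp n (A : 'M[F2]_n) (S : {set 'I_n}) :
  A \in unitmx -> kerP A S <-> kerP (invmx A) (~: S).
Proof.
move=> U; split.
  by apply: Lhalf => [i|]; [rewrite in_setC | exact: mulmxV].
apply: Lhalf => [i|]; [by rewrite in_setC negbK | exact: mulVmx].
Qed.

Unset Implicit Arguments.

Theorem mainTheorem19 (n : nat) (A : 'M[F2]_n) :
  is_graph A -> A \in unitmx ->
  (* (a) G^R is the unique graph H with R_0(H) = { V \ S : S in R_0(G) } *)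
  [/\ (is_graph (retro A) /\ R0 (retro A) = [set ~: S | S in R0 A]) /\
      (forall H : 'M[F2]_n, is_graph H ->
         R0 H = [set ~: S | S in R0 A] -> H = retro A),
  (* (b) *)
      (forall W : {set 'I_n}, reducible A W <-> reducible (retro A) (~: W))
  & (* (c) *)
      (forall W : {set 'I_n}, reducible A W ->
         Gamma A W \in unitmx /\ retro (Gamma A W) = subadj (~: W) (retro A))].
Proof.
move=> hA U.
have hB : is_graph (retro A) by rewrite /is_graph /retro trmx_inv hA.
have UB : retro A \in unitmx by rewrite /retro unitmx_inv.
have R0B : R0 (retro A) = [set ~: S | S in R0 A].
  apply/setP => W; rewrite inE; apply/idP/imsetP.
    move=> h; exists (~: W); last by rewrite setCK.
    rewrite inE; apply/KC; apply/(ker_comp _ U); rewrite setCK; exact/KC.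
  by move=> [S hS ->]; rewrite inE in hS; apply/KC; apply/(ker_comp _ U); apply/KC.
split; first split=> //.
- move=> H hH e.
  have he S : kerP H S <-> kerP (retro A) S.
    move/setP: (etrans e (esym R0B)) => /(_ S); rewrite !inE => e'.
    by split=> h; apply/KC; [rewrite -e' | rewrite e']; apply/KC.
  have d u : H u u = retro A u u.
    by apply: F2_eq; apply/idP/idP => h; apply/ker1; apply/he; apply/ker1.
  apply/matrixP => u v; case: (eqVneq u v) => [->|uv]; first exact: d.
  have hs M : is_graph M -> M v u = M u v by move=> hM; rewrite -[in LHS]hM mxE.
  have e2 : H u u * H v v - H u v * H v u = retro A u u * retro A v v - retro A u v * retro A v u.
    apply: F2_eq; apply/idP/idP => h.
      by apply/(@ker2 _ (retro A) u v hB uv); apply/he; apply/(@ker2 _ H u v hH uv).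
    by apply/(@ker2 _ H u v hH uv); apply/he; apply/(@ker2 _ (retro A) u v hB uv).
  move: e2; rewrite !d (hs _ hH) (hs _ hB) => /addrI /oppr_inj.
  by rewrite !F2_sq.
- move=> W; rewrite (red_ker _ hA U) (red_ker _ hB UB); exact: ker_comp.
- move=> W R; exact: GammaP.
Qed.
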